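(* Let $A$ be a bounded linear operator on a complex Hilbert space $\mathcal H \neq \{0\}$. Then \[ W_0(A)\cap \mathcal C_A = \operatorname{cl} W(A)\cap \mathcal C_A = \sigma(A)\cap \mathcal C_A, \] where $\mathcal C_A=\{z\in\mathbb C : |z|=\|A\|\}$.
   Context: The numerical range of $A$ is $W(A)=\{\langle Ax,x\rangle : x\in\mathcal H,\ \|x\|=1\}$, and $\operatorname{cl}W(A)$ denotes its closure in $\mathbb C$. The maximal numerical range $W_0(A)$ is the set of all $\lambda\in\mathbb C$ for which there exist unit vectors $x_n\in\mathcal H$ with $\|Ax_n\|\to\|A\|$ and $\langle Ax_n,x_n\rangle\to\lambda$. $\sigma(A)$ denotes the spectrum of $A$. *)

(* Defs.v *)
From Stdlib Require Import Reals Lra.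
Open Scope R_scope.
Set Implicit Arguments.

Record Cplx : Type := mkC { Re : R ; Im : R }.

Definition C0 : Cplx := mkC 0 0.
Definition C1 : Cplx := mkC 1 0.
Definition Cadd (a b : Cplx) : Cplx := mkC (Re a + Re b) (Im a + Im b).
Definition Copp (a : Cplx) : Cplx := mkC (- Re a) (- Im a).
Definition Csub (a b : Cplx) : Cplx := Cadd a (Copp b).
Definition Cmul (a b : Cplx) : Cplx :=
  mkC (Re a * Re b - Im a * Im b) (Re a * Im b + Im a * Re b).
Definition Cconj (a : Cplx) : Cplx := mkC (Re a) (- Im a).
Definition Cmod (a : Cplx) : R := sqrt (Re a * Re a + Im a * Im a).

Record HilbertSpace : Type := {
  carrier :> Type;
  hzero : carrier;
  hadd : carrier -> carrier -> carrier;
  hopp : carrier -> carrier;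
  hscal : Cplx -> carrier -> carrier;
  hinner : carrier -> carrier -> Cplx;
  hadd_assoc : forall x y z, hadd x (hadd y z) = hadd (hadd x y) z;
  hadd_comm : forall x y, hadd x y = hadd y x;
  hadd_zero : forall x, hadd hzero x = x;
  hadd_opp : forall x, hadd x (hopp x) = hzero;
  hscal_assoc : forall a b x, hscal a (hscal b x) = hscal (Cmul a b) x;
  hscal_one : forall x, hscal C1 x = x;
  hscal_distr_v : forall a x y, hscal a (hadd x y) = hadd (hscal a x) (hscal a y);
  hscal_distr_s : forall a b x, hscal (Cadd a b) x = hadd (hscal a x) (hscal b x);
  hinner_add_l : forall x y z, hinner (hadd x y) z = Cadd (hinner x z) (hinner y z);
  hinner_scal_l : forall a x y, hinner (hscal a x) y = Cmul a (hinner x y);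
  hinner_conj : forall x y, hinner y x = Cconj (hinner x y);
  hinner_pos : forall x, 0 <= Re (hinner x x);
  hinner_def : forall x, hinner x x = C0 -> x = hzero;
  hcomplete : forall u : nat -> carrier,
    (forall eps, eps > 0 -> exists N : nat, forall n m, (n >= N)%nat -> (m >= N)%nat ->
        sqrt (Re (hinner (hadd (u n) (hopp (u m))) (hadd (u n) (hopp (u m))))) < eps) ->
    exists l, forall eps, eps > 0 -> exists N : nat, forall n, (n >= N)%nat ->
        sqrt (Re (hinner (hadd (u n) (hopp l)) (hadd (u n) (hopp l)))) < eps
}.

Section Ops.
Context {H : HilbertSpace}.

Definition hsub (x y : H) : H := hadd H x (hopp H y).
Definition hnorm (x : H) : R := sqrt (Re (hinner H x x)).

Definition is_linear (A : H -> H) : Prop :=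
  (forall x y, A (hadd H x y) = hadd H (A x) (A y)) /\
  (forall a x, A (hscal H a x) = hscal H a (A x)).
Definition is_bounded_op (A : H -> H) : Prop :=
  is_linear A /\ exists M : R, forall x, hnorm (A x) <= M * hnorm x.

(** ||A|| = sup { ||Ax|| : ||x|| = 1 }  (H <> {0}) : [op_norm A r] says r is this sup *)
Definition op_norm (A : H -> H) (r : R) : Prop :=
  is_lub (fun t => exists x : H, hnorm x = 1 /\ t = hnorm (A x)) r.

Definition in_W (A : H -> H) (z : Cplx) : Prop :=
  exists x : H, hnorm x = 1 /\ z = hinner H (A x) x.

Definition in_clW (A : H -> H) (z : Cplx) : Prop :=
  forall eps, eps > 0 -> exists w, in_W A w /\ Cmod (Csub w z) < eps.

Definition in_W0 (A : H -> H) (nA : R) (z : Cplx) : Prop :=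
  exists x : nat -> H,
    (forall n, hnorm (x n) = 1) /\
    Un_cv (fun n => hnorm (A (x n))) nA /\
    Un_cv (fun n => Cmod (Csub (hinner H (A (x n)) (x n)) z)) 0.

Definition in_spectrum (A : H -> H) (z : Cplx) : Prop :=
  ~ exists B : H -> H, is_bounded_op B /\
      (forall x, B (hsub (A x) (hscal H z x)) = x) /\
      (forall x, hsub (A (B x)) (hscal H z (B x)) = x).

End Ops.

(* Main.v *)
Require Import Defs.
From Stdlib Require Import Reals Lra Psatz ClassicalEpsilon Classical.
Open Scope R_scope.

Lemma Ceq (a b : Cplx) : Re a = Re b -> Im a = Im b -> a = b.
Proof. destruct a, b; simpl; intros; subst; reflexivity. Qed.

Lemma sq_le (a b : R) : 0 <= a -> 0 <= b -> a * a <= b * b -> a <= b.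
Proof. intros; nra. Qed.

Lemma Cmod_ge0 a : 0 <= Cmod a.
Proof. apply sqrt_pos. Qed.

Lemma Cmod_sq a : Cmod a * Cmod a = Re a * Re a + Im a * Im a.
Proof. unfold Cmod. apply sqrt_sqrt. nra. Qed.

Lemma Cmod_real t : Cmod (mkC t 0) = Rabs t.
Proof. unfold Cmod; simpl. rewrite Rmult_0_l, Rplus_0_r. apply sqrt_Rsqr_abs. Qed.

Lemma Re_le_Cmod a : Re a <= Cmod a.
Proof.
  destruct (Rle_or_lt (Re a) 0). { pose proof (Cmod_ge0 a); lra. }
  apply sq_le; [lra| apply Cmod_ge0 |]. rewrite Cmod_sq. nra.
Qed.

Lemma Cmod_0_inv a : Cmod a = 0 -> a = Defs.C0.
Proof.
  intro E. pose proof (Cmod_sq a) as S. rewrite E in S.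
  assert (E1 : Re a * Re a = 0) by nra. assert (E2 : Im a * Im a = 0) by nra.
  apply Ceq; simpl; [destruct (Rmult_integral _ _ E1) | destruct (Rmult_integral _ _ E2)]; auto.
Qed.

Lemma Cmod_C0 : Cmod Defs.C0 = 0.
Proof. unfold Cmod, Defs.C0; simpl. rewrite Rmult_0_l, Rplus_0_r. apply sqrt_0. Qed.

Lemma dot_le_Cmod a b : Re a * Re b + Im a * Im b <= Cmod a * Cmod b.
Proof.
  pose proof (Cmod_sq a); pose proof (Cmod_sq b); pose proof (Cmod_ge0 a); pose proof (Cmod_ge0 b).
  destruct (Rle_or_lt (Re a * Re b + Im a * Im b) 0). nra.
  apply sq_le; try nra.
  replace (Cmod a * Cmod b * (Cmod a * Cmod b)) with ((Cmod a * Cmod a) * (Cmod b * Cmod b)) by ring.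
  rewrite H, H0. pose proof (Rle_0_sqr (Re a * Im b - Im a * Re b)) as Q. unfold Rsqr in Q. nra.
Qed.

Lemma Cmod_tri a b : Cmod (Cadd a b) <= Cmod a + Cmod b.
Proof.
  pose proof (Cmod_ge0 a); pose proof (Cmod_ge0 b); pose proof (dot_le_Cmod a b).
  apply sq_le; [apply Cmod_ge0| lra |].
  rewrite Cmod_sq. pose proof (Cmod_sq a); pose proof (Cmod_sq b). simpl. nra.
Qed.

Lemma Cmod_sub_ge a b : Cmod a - Cmod b <= Cmod (Csub a b).
Proof.
  pose proof (Cmod_tri (Csub a b) b).
  replace (Cadd (Csub a b) b) with a in H by (apply Ceq; simpl; ring). lra.
Qed.

Lemma Cmod_sub_sym a b : Cmod (Csub a b) = Cmod (Csub b a).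
Proof. unfold Cmod; simpl. f_equal. ring. Qed.

Lemma Cmod_mul a b : Cmod (Cmul a b) = Cmod a * Cmod b.
Proof.
  apply Rle_antisym; apply sq_le; try (apply Cmod_ge0); try (apply Rmult_le_pos; apply Cmod_ge0);
  replace (Cmod a * Cmod b * (Cmod a * Cmod b)) with ((Cmod a * Cmod a) * (Cmod b * Cmod b)) by ring;
  rewrite !Cmod_sq; simpl; nra.
Qed.

Section Hil.
Variable H : HilbertSpace.
Local Notation add := (hadd H).
Local Notation opp := (hopp H).
Local Notation zero := (hzero H).
Local Notation scal := (hscal H).
Local Notation inner := (hinner H).

Lemma addr0 (x : H) : add x zero = x.
Proof. rewrite hadd_comm. apply hadd_zero. Qed.

Lemma addNr (x : H) : add (opp x) x = zero.
Proof. rewrite hadd_comm. apply hadd_opp. Qed.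

Lemma add_cancel_l (a b c : H) : add a b = add a c -> b = c.
Proof.
  intro E. rewrite <- (hadd_zero H b), <- (hadd_zero H c), <- (addNr a), <- !hadd_assoc, E.
  reflexivity.
Qed.

Lemma opp_unique (a b : H) : add a b = zero -> b = opp a.
Proof. intro E. apply (add_cancel_l a). rewrite E, hadd_opp. reflexivity. Qed.

Lemma double_zero (s : H) : s = add s s -> s = zero.
Proof. intro E. apply (add_cancel_l s). rewrite addr0. symmetry. exact E. Qed.

Lemma scal0 (x : H) : scal Defs.C0 x = zero.
Proof.
  apply double_zero. rewrite <- hscal_distr_s. f_equal. apply Ceq; simpl; ring.
Qed.

Lemma scal_zero (a : Cplx) : scal a zero = zero.
Proof. apply double_zero. rewrite <- hscal_distr_v, addr0. reflexivity. Qed.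

Lemma opp_scal (x : H) : opp x = scal (mkC (-1) 0) x.
Proof.
  symmetry. apply opp_unique. rewrite <- (hscal_one H x) at 1. rewrite <- hscal_distr_s.
  replace (Cadd Defs.C1 (mkC (-1) 0)) with Defs.C0 by (apply Ceq; simpl; ring). apply scal0.
Qed.

Lemma opp_opp (x : H) : opp (opp x) = x.
Proof. symmetry. apply opp_unique. apply addNr. Qed.

Lemma opp_add (u v : H) : opp (add u v) = add (opp u) (opp v).
Proof. rewrite !opp_scal. apply hscal_distr_v. Qed.

Lemma scal_opp (a : Cplx) (x : H) : scal a (opp x) = opp (scal a x).
Proof. rewrite !opp_scal, !hscal_assoc. f_equal. apply Ceq; simpl; ring. Qed.

Lemma scal_sub (a : Cplx) (u v : H) : scal a (hsub u v) = hsub (scal a u) (scal a v).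
Proof. unfold hsub. rewrite hscal_distr_v, scal_opp. reflexivity. Qed.

Lemma add_swap (a b c : H) : add a (add b c) = add b (add a c).
Proof. rewrite !hadd_assoc, (hadd_comm H a b). reflexivity. Qed.

Lemma sub_sub_r (u v y : H) : hsub (hsub u y) (hsub v y) = hsub u v.
Proof.
  unfold hsub. rewrite opp_add, opp_opp, <- !hadd_assoc. f_equal.
  rewrite add_swap, (hadd_comm H (opp y) y), hadd_opp, addr0. reflexivity.
Qed.

Lemma sub_chain (x y z : H) : hsub x z = add (hsub x y) (hsub y z).
Proof.
  unfold hsub. rewrite <- !hadd_assoc. f_equal. rewrite hadd_assoc, addNr, hadd_zero. reflexivity.
Qed.

Lemma sub_opp (x y : H) : hsub y x = opp (hsub x y).
Proof. unfold hsub. rewrite opp_add, opp_opp, hadd_comm. reflexivity. Qed.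

Lemma sub_eq0 (x y : H) : hsub x y = zero -> x = y.
Proof.
  unfold hsub; intro E. apply opp_unique in E. rewrite <- (opp_opp x), <- (opp_opp y), E. reflexivity.
Qed.

Lemma sub_add_cancel (x y : H) : add (hsub x y) y = x.
Proof. unfold hsub. rewrite <- hadd_assoc, addNr, addr0. reflexivity. Qed.

Definition additive (f : H -> H) := forall x y, f (add x y) = add (f x) (f y).

Lemma add_map_zero f : additive f -> f zero = zero.
Proof. intro Hf. apply double_zero. rewrite <- Hf, hadd_zero. reflexivity. Qed.

Lemma add_map_opp f x : additive f -> f (opp x) = opp (f x).
Proof.
  intro Hf. apply opp_unique. rewrite <- Hf, hadd_opp. apply add_map_zero; auto.
Qed.

Lemma add_map_sub f x y : additive f -> f (hsub x y) = hsub (f x) (f y).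
Proof. intro Hf. unfold hsub. rewrite Hf, add_map_opp; auto. Qed.

Lemma inner_add_r (x y z : H) : inner x (add y z) = Cadd (inner x y) (inner x z).
Proof.
  rewrite (hinner_conj H (add y z) x), hinner_add_l, (hinner_conj H y x), (hinner_conj H z x).
  apply Ceq; simpl; ring.
Qed.

Lemma inner_scal_r (a : Cplx) (x y : H) : inner x (scal a y) = Cmul (Cconj a) (inner x y).
Proof.
  rewrite (hinner_conj H (scal a y) x), hinner_scal_l, (hinner_conj H y x).
  apply Ceq; simpl; ring.
Qed.

Lemma inner_zero_l (y : H) : inner zero y = Defs.C0.
Proof.
  rewrite <- (scal0 zero), hinner_scal_l. apply Ceq; simpl; ring.
Qed.

Lemma inner_zero_r (y : H) : inner y zero = Defs.C0.
Proof. rewrite hinner_conj, inner_zero_l. apply Ceq; simpl; ring. Qed.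

Lemma Im_inner_self (x : H) : Im (inner x x) = 0.
Proof. pose proof (hinner_conj H x x) as E. apply (f_equal Im) in E. simpl in E. lra. Qed.

Definition nsq (x : H) := Re (inner x x).

Lemma nsq_ge0 x : 0 <= nsq x.
Proof. apply hinner_pos. Qed.

Lemma hnorm_ge0 (x : H) : 0 <= hnorm x.
Proof. apply sqrt_pos. Qed.

Lemma hnorm_sq (x : H) : hnorm x * hnorm x = nsq x.
Proof. apply sqrt_sqrt, hinner_pos. Qed.

Lemma nsq_add (x y : H) : nsq (add x y) = nsq x + 2 * Re (inner x y) + nsq y.
Proof.
  unfold nsq. rewrite hinner_add_l, !inner_add_r. simpl.
  rewrite (hinner_conj H x y). simpl. ring.
Qed.

Lemma nsq_scal (a : Cplx) (x : H) : nsq (scal a x) = (Re a * Re a + Im a * Im a) * nsq x.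
Proof.
  unfold nsq. rewrite hinner_scal_l, inner_scal_r. simpl. rewrite Im_inner_self. ring.
Qed.

Lemma hnorm_scal (a : Cplx) (x : H) : hnorm (scal a x) = Cmod a * hnorm x.
Proof.
  unfold hnorm, Cmod. fold (nsq (scal a x)). fold (nsq x). rewrite nsq_scal.
  apply sqrt_mult. nra. apply nsq_ge0.
Qed.

Lemma hnorm_zero : hnorm zero = 0.
Proof. unfold hnorm. rewrite inner_zero_l. simpl. apply sqrt_0. Qed.

Lemma hnorm_zero_inv (x : H) : hnorm x = 0 -> x = zero.
Proof.
  intro E. apply sqrt_eq_0 in E; [| apply hinner_pos].
  apply hinner_def. apply Ceq. exact E. apply Im_inner_self.
Qed.

Lemma hnorm_opp (x : H) : hnorm (opp x) = hnorm x.
Proof.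
  rewrite opp_scal, hnorm_scal, Cmod_real. replace (Rabs (-1)) with 1. ring.
  unfold Rabs; destruct Rcase_abs; lra.
Qed.

Lemma hnorm_sub_sym (x y : H) : hnorm (hsub x y) = hnorm (hsub y x).
Proof. rewrite (sub_opp x y), hnorm_opp. reflexivity. Qed.

Lemma CS (x y : H) : Cmod (inner x y) <= hnorm x * hnorm y.
Proof.
  destruct (Req_dec (nsq y) 0) as [Y0|Y0].
  - assert (y = zero).
    { apply hinner_def. apply Ceq; [exact Y0 | apply Im_inner_self]. }
    subst y. rewrite inner_zero_r, Cmod_C0, hnorm_zero. lra.
  - pose proof (nsq_ge0 y) as Yp.
    set (p := inner x y).
    set (Y := nsq y).
    assert (Ypos : 0 < Y) by (unfold Y in *; lra).
    set (a := mkC (- Re p / Y) (- Im p / Y)).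
    pose proof (nsq_ge0 (add x (scal a y))) as P.
    rewrite nsq_add, nsq_scal in P. unfold nsq at 2 in P. rewrite inner_scal_r in P.
    fold p in P. fold Y in P. simpl in P.
    change (Re (inner y y)) with Y in P.
    assert (E : forall X, X + 2 * (- Re p / Y * Re p - - (- Im p / Y) * Im p) + (- Re p / Y * (- Re p / Y) + - Im p / Y * (- Im p / Y)) * Y = X - (Re p * Re p + Im p * Im p) / Y)
      by (intro; field; apply Rgt_not_eq; lra).
    rewrite E in P.
    assert (Q : Re p * Re p + Im p * Im p <= nsq x * Y).
    { apply Rmult_le_compat_r with (r := Y) in P; [|lra].
      replace ((nsq x - (Re p * Re p + Im p * Im p) / Y) * Y) with
        (nsq x * Y - (Re p * Re p + Im p * Im p)) in P by (field; apply Rgt_not_eq; lra). lra. }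
    unfold Cmod, hnorm. rewrite <- sqrt_mult by apply hinner_pos.
    apply sqrt_le_1_alt. exact Q.
Qed.

Lemma hnorm_tri (x y : H) : hnorm (add x y) <= hnorm x + hnorm y.
Proof.
  pose proof (hnorm_ge0 x); pose proof (hnorm_ge0 y).
  apply sq_le; [apply hnorm_ge0 | lra |].
  rewrite hnorm_sq, nsq_add, <- (hnorm_sq x), <- (hnorm_sq y).
  pose proof (Re_le_Cmod (inner x y)); pose proof (CS x y). nra.
Qed.

Lemma hnorm_sub_tri (x y z : H) : hnorm (hsub x z) <= hnorm (hsub x y) + hnorm (hsub y z).
Proof. rewrite (sub_chain x y z). apply hnorm_tri. Qed.

Lemma hnorm_sub_le (x y : H) : hnorm (hsub x y) <= hnorm x + hnorm y.
Proof. unfold hsub. rewrite <- (hnorm_opp y). apply hnorm_tri. Qed.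

End Hil.

Lemma le_eps_0 (a : R) : 0 <= a -> (forall e, e > 0 -> a < e) -> a = 0.
Proof.
  intros H0 H1. destruct (Req_dec a 0); auto. specialize (H1 a). lra.
Qed.

Section Fix.
Variable H : HilbertSpace.

Lemma norm_eq0_eq (x y : H) : (forall e, e > 0 -> hnorm (hsub x y) < e) -> x = y.
Proof.
  intro E. apply sub_eq0, hnorm_zero_inv. apply le_eps_0; auto. apply hnorm_ge0.
Qed.

Lemma complete' (u : nat -> H) :
  (forall eps, eps > 0 -> exists N : nat, forall n m, (n >= N)%nat -> (m >= N)%nat ->
        hnorm (hsub (u n) (u m)) < eps) ->
  exists l, forall eps, eps > 0 -> exists N : nat, forall n, (n >= N)%nat ->
        hnorm (hsub (u n) l) < eps.
Proof. intro Hc. exact (hcomplete H u Hc). Qed.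

Lemma banach (F : H -> H) (q : R) : 0 <= q < 1 ->
  (forall x y, hnorm (hsub (F x) (F y)) <= q * hnorm (hsub x y)) ->
  exists x, F x = x.
Proof.
  intros Hq HF.
  set (u := fun k => Nat.iter k F (hzero H)).
  set (d := hnorm (hsub (u 1%nat) (u 0%nat))).
  assert (d0 : 0 <= d) by apply hnorm_ge0.
  assert (step : forall k, hnorm (hsub (u (S k)) (u k)) <= q ^ k * d).
  { induction k. simpl. unfold d; simpl. lra.
    change (u (S (S k))) with (F (u (S k))). change (u (S k)) with (F (u k)) at 2.
    eapply Rle_trans. apply HF. simpl. change (F (u k)) with (u (S k)).
    apply Rmult_le_compat_l with (r := q) in IHk; [|lra]. lra. }
  assert (tail : forall m p, hnorm (hsub (u (m + p)%nat) (u m)) <= d * q ^ m * (1 - q ^ p) / (1 - q)).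
  { intros m p. induction p.
    - rewrite Nat.add_0_r. unfold hsub. rewrite hadd_opp, hnorm_zero. simpl.
      replace (d * q ^ m * (1 - 1) / (1 - q)) with 0 by (field; repeat split; intro; lra). lra.
    - eapply Rle_trans. apply (hnorm_sub_tri _ _ (u (m + p)%nat)).
      rewrite Nat.add_succ_r. pose proof (step (m + p)%nat). rewrite pow_add in H0.
      replace (d * q ^ m * (1 - q ^ S p) / (1 - q)) with
        (q ^ m * q ^ p * d + d * q ^ m * (1 - q ^ p) / (1 - q)) by (simpl; field; repeat split; intro; lra).
      lra. }
  assert (bnd : forall m p, hnorm (hsub (u (m + p)%nat) (u m)) <= d * q ^ m / (1 - q)).
  { intros. eapply Rle_trans. apply tail.
    assert (0 <= q ^ p) by (apply pow_le; lra). assert (0 <= q ^ m) by (apply pow_le; lra).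
    unfold Rdiv. apply Rmult_le_compat_r. apply Rlt_le, Rinv_0_lt_compat; lra.
    assert (0 <= d * q ^ m * q ^ p) by (repeat apply Rmult_le_pos; lra). nra. }
  destruct (complete' u) as [l Hl].
  { intros eps Heps.
    destruct (pow_lt_1_zero q ltac:(rewrite Rabs_right; lra) (eps * (1 - q) / (d + 1)))
      as [N HN].
    { apply Rdiv_lt_0_compat; nra. }
    exists N. intros n m Hn Hm.
    assert (G : forall a b, (b >= N)%nat -> (a >= b)%nat -> hnorm (hsub (u a) (u b)) < eps).
    { intros a b Hb Hab. replace a with (b + (a - b))%nat by lia.
      eapply Rle_lt_trans. apply bnd.
      specialize (HN b Hb). rewrite Rabs_right in HN by (apply Rle_ge, pow_le; lra).
      assert (0 <= q ^ b) by (apply pow_le; lra).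
      apply Rmult_lt_compat_r with (r := d + 1) in HN; [|lra].
      replace (eps * (1 - q) / (d + 1) * (d + 1)) with (eps * (1 - q)) in HN by (field; repeat split; intro; lra).
      apply (Rmult_lt_reg_r (1 - q)); [lra|].
      replace (d * q ^ b / (1 - q) * (1 - q)) with (d * q ^ b) by (field; repeat split; intro; lra). nra. }
    destruct (Nat.le_ge_cases n m).
    - rewrite hnorm_sub_sym. apply G; lia.
    - apply G; lia. }
  exists l. apply norm_eq0_eq. intros e He.
  destruct (Hl (e / 2) ltac:(lra)) as [N HN].
  eapply Rle_lt_trans. apply (hnorm_sub_tri _ _ (F (u N))).
  pose proof (HF l (u N)). pose proof (HN N (le_n _)). pose proof (HN (S N) (le_S _ _ (le_n _))).
  rewrite (hnorm_sub_sym H l (u N)) in H0.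
  change (F (u N)) with (u (S N)) in *.
  pose proof (hnorm_ge0 H (hsub (u N) l)). nra.
Qed.

End Fix.

Section Op.
Variable H : HilbertSpace.
Variable A : H -> H.
Variable nA : R.
Hypothesis Aadd : additive H A.
Hypothesis Ascal : forall a x, A (hscal H a x) = hscal H a (A x).
Hypothesis Abnd : forall x, hnorm (A x) <= nA * hnorm x.
Hypothesis nA0 : 0 <= nA.

Local Notation add := (hadd H).
Local Notation opp := (hopp H).
Local Notation zero := (hzero H).
Local Notation scal := (hscal H).
Local Notation inner := (hinner H).

Lemma unit_nsq (x : H) : hnorm x = 1 -> nsq H x = 1.
Proof. intro E. rewrite <- hnorm_sq, E. ring. Qed.

Lemma unit_inner (x : H) : hnorm x = 1 -> inner x x = Defs.C1.
Proof. intro E. apply Ceq. apply unit_nsq; auto. apply Im_inner_self. Qed.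

Lemma approx_eig (z : Cplx) : Cmod z = nA -> in_clW A z ->
  forall d, d > 0 -> exists x, hnorm x = 1 /\ hnorm (hsub (A x) (scal z x)) < d.
Proof.
  intros Hz Hcl d Hd.
  set (eta := d * d / (2 * nA + 1)).
  assert (Heta : eta > 0) by (unfold eta; apply Rdiv_lt_0_compat; nra).
  destruct (Hcl eta Heta) as [w [[x [Hx Ew]] Hw]].
  exists x. split; auto.
  assert (NS : nsq H (hsub (A x) (scal z x)) < d * d).
  { unfold hsub. rewrite opp_scal, hscal_assoc, nsq_add, nsq_scal, (unit_nsq x Hx).
    rewrite inner_scal_r, <- Ew.
    rewrite <- (hnorm_sq H (A x)).
    pose proof (Abnd x) as B. rewrite Hx in B. pose proof (hnorm_ge0 H (A x)).
    pose proof (Cmod_sq z) as Z. rewrite Hz in Z.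
    pose proof (dot_le_Cmod z (Csub z w)) as D. rewrite Cmod_sub_sym, Hz in D.
    simpl in *.
    assert (Hw' : nA * Cmod (Csub w z) <= nA * eta) by (apply Rmult_le_compat_l; lra).
    assert (nA * eta * 2 < d * d).
    { unfold eta. apply (Rmult_lt_reg_r (2 * nA + 1)); [lra|].
      replace (nA * (d * d / (2 * nA + 1)) * 2 * (2 * nA + 1)) with (2 * nA * (d * d)) by (field; lra).
      nra. }
    nra. }
  rewrite <- hnorm_sq in NS. pose proof (hnorm_ge0 H (hsub (A x) (scal z x))). nra.
Qed.

Lemma clW_W0 (z : Cplx) : Cmod z = nA -> in_clW A z -> in_W0 A nA z.
Proof.
  intros Hz Hcl.
  assert (Ex : forall k : nat, exists x : H, hnorm x = 1 /\
      Cmod (Csub (inner (A x) x) z) < / (INR k + 1)).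
  { intro k. destruct (Hcl (/ (INR k + 1))) as [w [[x [Hx Ew]] Hw]].
    { apply Rlt_gt, Rinv_0_lt_compat. pose proof (pos_INR k); lra. }
    exists x. subst w. auto. }
  set (xs := fun k => proj1_sig (constructive_indefinite_description _ (Ex k))).
  assert (Pxs : forall k, hnorm (xs k) = 1 /\ Cmod (Csub (inner (A (xs k)) (xs k)) z) < / (INR k + 1))
    by (intro k; exact (proj2_sig (constructive_indefinite_description _ (Ex k)))).
  assert (Hs : forall eps, eps > 0 -> exists N, forall k, (k >= N)%nat -> / (INR k + 1) < eps).
  { intros eps He. destruct (INR_unbounded (/ eps)) as [N HN]. exists N. intros k Hk.
    apply le_INR in Hk. rewrite <- (Rinv_inv eps). apply Rinv_lt_contravar.
    apply Rmult_lt_0_compat. apply Rinv_0_lt_compat; lra. pose proof (pos_INR k); lra. lra. }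
  exists xs. split; [intro k; apply Pxs|]. split.
  - intros eps He. destruct (Hs eps He) as [N HN]. exists N. intros k Hk.
    destruct (Pxs k) as [H1 H2]. specialize (HN k Hk).
    pose proof (CS H (A (xs k)) (xs k)) as C. rewrite H1 in C.
    pose proof (Cmod_sub_ge z (inner (A (xs k)) (xs k))) as T.
    rewrite Cmod_sub_sym in T.
    pose proof (Abnd (xs k)) as B. rewrite H1 in B.
    unfold Rdist. rewrite Rabs_left1; lra.
  - intros eps He. destruct (Hs eps He) as [N HN]. exists N. intros k Hk.
    destruct (Pxs k) as [H1 H2]. specialize (HN k Hk).
    unfold Rdist. rewrite Rminus_0_r, Rabs_right by (apply Rle_ge, Cmod_ge0). lra.
Qed.

Lemma W0_clW (z : Cplx) : in_W0 A nA z -> in_clW A z.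
Proof.
  intros [x [Hx [_ Hc]]] eps He. destruct (Hc eps He) as [N HN].
  exists (inner (A (x N)) (x N)). split. exists (x N). auto.
  specialize (HN N (le_n _)). unfold Rdist in HN. rewrite Rminus_0_r in HN.
  eapply Rle_lt_trans; [apply Rle_abs | exact HN].
Qed.

Lemma clW_spec (z : Cplx) : Cmod z = nA -> in_clW A z -> in_spectrum A z.
Proof.
  intros Hz Hcl [B [[[Badd Bscal] [M HM]] [HB1 HB2]]].
  destruct (approx_eig z Hz Hcl (/ (Rabs M + 1))) as [x [Hx Hs]].
  { apply Rlt_gt, Rinv_0_lt_compat. pose proof (Rabs_pos M); lra. }
  pose proof (HM (hsub (A x) (scal z x))) as E. rewrite HB1, Hx in E.
  set (s := hnorm (hsub (A x) (scal z x))) in *.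
  pose proof (Rle_abs M). pose proof (hnorm_ge0 H (hsub (A x) (scal z x))). fold s in H1.
  pose proof (Rabs_pos M).
  assert (T : (Rabs M + 1) * / (Rabs M + 1) = 1) by (apply Rinv_r; lra).
  assert (M * s <= (Rabs M + 1) * s) by (apply Rmult_le_compat_r; lra).
  assert ((Rabs M + 1) * s < (Rabs M + 1) * / (Rabs M + 1)) by (apply Rmult_lt_compat_l; lra).
  lra.
Qed.

End Op.

Section Inv.
Variable H : HilbertSpace.
Variable A : H -> H.
Variable nA : R.
Hypothesis Aadd : additive H A.
Hypothesis Ascal : forall a x, A (hscal H a x) = hscal H a (A x).
Hypothesis Abnd : forall x, hnorm (A x) <= nA * hnorm x.
Hypothesis nA0 : 0 < nA.
Variable z : Cplx.
Hypothesis Hz : Cmod z = nA.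
Variable eps : R.
Hypothesis Heps : eps > 0.
Hypothesis Hfar : forall x : H, hnorm x = 1 -> eps <= Cmod (Csub (hinner H (A x) x) z).

Local Notation add := (hadd H).
Local Notation opp := (hopp H).
Local Notation zero := (hzero H).
Local Notation scal := (hscal H).
Local Notation inner := (hinner H).


Lemma small_inv (K e : R) : 0 <= K -> e > 0 ->
  exists N : nat, forall k, (k >= N)%nat -> / (INR k + 4) * K < e.
Proof.
  intros HK He. destruct (INR_unbounded (K / e)) as [N HN]. exists N. intros k Hk.
  apply le_INR in Hk. set (a := INR k + 4). assert (Ha : 0 < a) by (unfold a; pose proof (pos_INR k); lra).
  apply (Rmult_lt_reg_r a); [lra|]. replace (/ a * K * a) with K by (field; repeat split; intro; lra).
  assert (Q : K / e < a) by (unfold a; lra).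
  apply (Rmult_lt_compat_l e) in Q; [|lra]. replace (e * (K / e)) with K in Q by (field; repeat split; intro; lra). lra.
Qed.

Lemma inv4_bounds (k : nat) : 0 < / (INR k + 4) <= 1/4.
Proof.
  pose proof (pos_INR k). split. apply Rinv_0_lt_compat; lra.
  replace (1/4) with (/ 4) by field. apply Rinv_le_contravar; lra.
Qed.

Lemma inv4_mono (k N : nat) : (k >= N)%nat -> / (INR k + 4) <= / (INR N + 4).
Proof.
  intro Hk. apply le_INR in Hk. pose proof (pos_INR N). apply Rinv_le_contravar; lra.
Qed.

Definition L (r : R) (x : H) : H := hsub (scal (mkC r 0) (A x)) (scal z x).

Lemma scal_sub_s (a b : Cplx) (v : H) : hsub (scal a v) (scal b v) = scal (Csub a b) v.
Proof.
  unfold hsub, Csub. rewrite opp_scal, hscal_assoc, hscal_distr_s. f_equal. f_equal.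
  apply Ceq; simpl; ring.
Qed.

Lemma L_add r : additive H (L r).
Proof.
  intros x y. unfold L, hsub. rewrite Aadd, !hscal_distr_v, opp_add.
  rewrite <- !hadd_assoc. f_equal. rewrite !hadd_assoc. f_equal. apply hadd_comm.
Qed.

Lemma L_scal r a x : L r (scal a x) = scal a (L r x).
Proof.
  unfold L. rewrite scal_sub, Ascal, !hscal_assoc. f_equal; f_equal; apply Ceq; simpl; ring.
Qed.

Lemma L1 x : L 1 x = hsub (A x) (scal z x).
Proof. unfold L. change (mkC 1 0) with Defs.C1. rewrite hscal_one. reflexivity. Qed.

Lemma L_diff r s x : hsub (L r x) (L s x) = scal (mkC (r - s) 0) (A x).
Proof.
  unfold L. rewrite sub_sub_r, scal_sub_s. f_equal. apply Ceq; simpl; ring.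
Qed.

Lemma L_upper r x : 0 <= r -> hnorm (L r x) <= (r * nA + nA) * hnorm x.
Proof.
  intro Hr. unfold L. eapply Rle_trans. apply hnorm_sub_le.
  rewrite !hnorm_scal, Cmod_real, Hz, Rabs_right by lra.
  pose proof (Abnd x). pose proof (hnorm_ge0 H x). nra.
Qed.

Lemma L_lower_unit r u : 1/4 <= r <= 1 -> hnorm u = 1 -> eps / 2 <= hnorm (L r u).
Proof.
  intros Hr Hu.
  pose proof (CS H (L r u) u) as C. rewrite Hu, Rmult_1_r in C.
  eapply Rle_trans; [|exact C].
  set (w := inner (A u) u).
  assert (E : inner (L r u) u = Csub (Cmul (mkC r 0) w) z).
  { unfold L, hsub. rewrite hinner_add_l, opp_scal, !hinner_scal_l, unit_inner by auto.
    fold w. apply Ceq; simpl; ring. }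
  rewrite E.
  pose proof (Hfar u Hu) as F. fold w in F.
  pose proof (CS H (A u) u) as Cw. fold w in Cw. rewrite Hu, Rmult_1_r in Cw.
  pose proof (Abnd u) as B. rewrite Hu, Rmult_1_r in B.
  pose proof (Cmod_sq w) as W. pose proof (Cmod_sq z) as Z. rewrite Hz in Z.
  pose proof (Cmod_sq (Csub w z)) as D. pose proof (Cmod_ge0 w).
  pose proof (Cmod_ge0 (Csub w z)).
  apply sq_le; [lra | apply Cmod_ge0 |].
  rewrite Cmod_sq. simpl in *.
  set (w1 := Re w) in *. set (w2 := Im w) in *. set (z1 := Re z) in *. set (z2 := Im z) in *.
  assert (Id : (r * w1 - 0 * w2 + - z1) * (r * w1 - 0 * w2 + - z1) + (r * w2 + 0 * w1 + - z2) * (r * w2 + 0 * w1 + - z2)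
     = r * ((w1 + - z1) * (w1 + - z1) + (w2 + - z2) * (w2 + - z2)) + (1 - r) * ((z1 * z1 + z2 * z2) - r * (w1 * w1 + w2 * w2)))
     by ring.
  rewrite Id.
  assert (P1 : 0 <= (1 - r) * ((z1 * z1 + z2 * z2) - r * (w1 * w1 + w2 * w2))).
  { apply Rmult_le_pos. lra. assert (Cmod w * Cmod w <= nA * nA) by nra. nra. }
  assert (eps * eps <= Cmod (Csub w z) * Cmod (Csub w z)) by nra.
  nra.
Qed.

Lemma L_lower r x : 1/4 <= r <= 1 -> eps / 2 * hnorm x <= hnorm (L r x).
Proof.
  intro Hr. destruct (Req_dec (hnorm x) 0) as [E|E].
  - rewrite E, Rmult_0_r. apply hnorm_ge0.
  - set (t := hnorm x). assert (Ht : 0 < t) by (pose proof (hnorm_ge0 H x); unfold t in *; lra).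
    set (u := scal (mkC (/ t) 0) x).
    assert (Hu : hnorm u = 1).
    { unfold u. rewrite hnorm_scal, Cmod_real, Rabs_right. fold t. field; repeat split; intro; lra.
      apply Rle_ge, Rlt_le, Rinv_0_lt_compat; lra. }
    assert (Ex : x = scal (mkC t 0) u).
    { unfold u. rewrite hscal_assoc. replace (Cmul (mkC t 0) (mkC (/ t) 0)) with Defs.C1.
      rewrite hscal_one; auto. apply Ceq; simpl; field; lra. }
    rewrite Ex at 1. rewrite L_scal, hnorm_scal, Cmod_real, Rabs_right by lra.
    pose proof (L_lower_unit r u Hr Hu). nra.
Qed.

Lemma L_inj x y : L 1 x = L 1 y -> x = y.
Proof.
  intro E. apply sub_eq0, hnorm_zero_inv.
  pose proof (L_lower 1 (hsub x y) ltac:(lra)) as P.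
  rewrite add_map_sub in P by apply L_add. rewrite E in P. unfold hsub at 2 in P.
  rewrite hadd_opp, hnorm_zero in P. pose proof (hnorm_ge0 H (hsub x y)). nra.
Qed.


Lemma nA_z : Re z * Re z + Im z * Im z = nA * nA.
Proof. rewrite <- Cmod_sq, Hz. reflexivity. Qed.

Lemma sub_sub_self (a y : H) : hsub a (hsub a y) = y.
Proof.
  unfold hsub. rewrite opp_add, opp_opp, hadd_assoc, hadd_opp, hadd_zero. reflexivity.
Qed.

Lemma solve_r r : 0 <= r < 1 -> forall y, exists x, L r x = y.
Proof.
  intros Hr y.
  set (zi := mkC (Re z / (nA * nA)) (- Im z / (nA * nA))).
  assert (Czi : Cmod zi = / nA).
  { apply Rle_antisym; apply sq_le; try apply Cmod_ge0;
      try (apply Rlt_le, Rinv_0_lt_compat; lra);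
      rewrite Cmod_sq; unfold zi; simpl; pose proof nA_z;
      replace (Re z / (nA * nA) * (Re z / (nA * nA)) + - Im z / (nA * nA) * (- Im z / (nA * nA)))
        with ((Re z * Re z + Im z * Im z) / (nA * nA * (nA * nA))) by (field; repeat split; intro; lra);
      rewrite nA_z; right; field; lra. }
  set (F := fun x => scal zi (hsub (scal (mkC r 0) (A x)) y)).
  destruct (banach H F r ltac:(lra)) as [x Hx].
  - intros a b. unfold F. rewrite <- scal_sub, sub_sub_r, <- scal_sub, <- add_map_sub by auto.
    rewrite !hnorm_scal, Czi, Cmod_real, Rabs_right by lra.
    pose proof (Abnd (hsub a b)). pose proof (hnorm_ge0 H (hsub a b)).
    apply Rle_trans with (/ nA * (r * (nA * hnorm (hsub a b)))).
    + apply Rmult_le_compat_l. apply Rlt_le, Rinv_0_lt_compat; lra.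
      apply Rmult_le_compat_l; lra.
    + right. field; repeat split; intro; lra.
  - exists x. unfold L. rewrite <- Hx at 2. unfold F. rewrite hscal_assoc.
    replace (Cmul z zi) with Defs.C1. rewrite hscal_one.
    apply sub_sub_self.
    apply Ceq; unfold zi; simpl; pose proof nA_z; field_simplify; try lra.
    replace (Re z ^ 2 + Im z ^ 2) with (nA * nA) by (rewrite <- H0; ring). field; repeat split; intro; lra.
Qed.


Lemma solve_1 : forall y, exists x, L 1 x = y.
Proof.
  intro y.
  set (rk := fun k : nat => 1 - / (INR k + 4)).
  assert (Ex : forall k, exists x, L (rk k) x = y).
  { intro k. apply solve_r. unfold rk. pose proof (inv4_bounds k). lra. }
  set (xs := fun k => proj1_sig (constructive_indefinite_description _ (Ex k))).
  assert (Pxs : forall k, L (rk k) (xs k) = y)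
    by (intro k; exact (proj2_sig (constructive_indefinite_description _ (Ex k)))).
  set (c := eps / 2). assert (Hc : 0 < c) by (unfold c; lra).
  set (Y := hnorm y). assert (HY : 0 <= Y) by apply hnorm_ge0.
  assert (rk_b : forall k, 1/4 <= rk k <= 1) by (intro k; unfold rk; pose proof (inv4_bounds k); lra).
  assert (bnd : forall k, hnorm (xs k) <= Y / c).
  { intro k. pose proof (L_lower (rk k) (xs k) (rk_b k)) as P. rewrite Pxs in P. fold Y in P.
    apply (Rmult_le_reg_l c); [lra|]. replace (c * (Y / c)) with Y by (field; repeat split; intro; lra). fold c in P. lra. }
  assert (Abx : forall k, hnorm (A (xs k)) <= nA * (Y / c)).
  { intro k. eapply Rle_trans. apply Abnd. apply Rmult_le_compat_l; [lra| apply bnd]. }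
  assert (diff : forall N k m, (k >= N)%nat -> (m >= N)%nat ->
            c * hnorm (hsub (xs k) (xs m)) <= / (INR N + 4) * (nA * (Y / c))).
  { intros N k m Hk Hm.
    eapply Rle_trans. apply (L_lower (rk k)). apply rk_b.
    rewrite add_map_sub by apply L_add. rewrite (Pxs k), <- (Pxs m) at 1.
    rewrite L_diff, hnorm_scal, Cmod_real.
    pose proof (inv4_mono k N Hk). pose proof (inv4_mono m N Hm).
    pose proof (inv4_bounds k). pose proof (inv4_bounds m).
    assert (Rabs (rk m - rk k) <= / (INR N + 4)).
    { unfold rk. apply Rabs_le. lra. }
    apply Rmult_le_compat; try apply Rabs_pos; try apply hnorm_ge0; auto. }
  destruct (complete' H xs) as [l Hl].
  { intros e He.
    destruct (small_inv (nA * (Y / c) / c) e) as [N HN]; auto.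
    { apply Rmult_le_pos. apply Rmult_le_pos. lra. apply Rmult_le_pos; [lra|]. apply Rlt_le, Rinv_0_lt_compat; lra.
      apply Rlt_le, Rinv_0_lt_compat; lra. }
    exists N. intros n m Hn Hm. pose proof (diff N n m Hn Hm). specialize (HN N (le_n _)).
    apply (Rmult_le_compat_r (/ c)) in H0; [|apply Rlt_le, Rinv_0_lt_compat; lra].
    replace (c * hnorm (hsub (xs n) (xs m)) * / c) with (hnorm (hsub (xs n) (xs m))) in H0 by (field; repeat split; intro; lra).
    unfold Rdiv at 2 in HN. rewrite <- Rmult_assoc in HN. lra. }
  exists l. apply norm_eq0_eq. intros e He.
  destruct (Hl (e / (2 * (2 * nA + 1)))) as [N1 HN1].
  { apply Rlt_gt, Rdiv_lt_0_compat; lra. }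
  destruct (small_inv (nA * (Y / c)) (e / 2)) as [N2 HN2].
  { apply Rmult_le_pos. lra. apply Rmult_le_pos; [lra|]. apply Rlt_le, Rinv_0_lt_compat; lra. }
  { lra. }
  set (k := Nat.max N1 N2).
  specialize (HN1 k ltac:(unfold k; lia)). specialize (HN2 k ltac:(unfold k; lia)).
  eapply Rle_lt_trans. apply (hnorm_sub_tri H _ (L 1 (xs k)) _).
  rewrite <- add_map_sub by apply L_add.
  rewrite <- (Pxs k). rewrite L_diff, hnorm_scal, Cmod_real.
  pose proof (L_upper 1 (hsub l (xs k)) ltac:(lra)) as U.
  rewrite hnorm_sub_sym in U.
  replace (1 - rk k) with (/ (INR k + 4)) by (unfold rk; ring).
  pose proof (inv4_bounds k). rewrite Rabs_right by lra.
  pose proof (Abx k).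
  assert (T1 : (1 * nA + nA) * hnorm (hsub (xs k) l) <= e / 2).
  { apply Rle_trans with ((2 * nA + 1) * (e / (2 * (2 * nA + 1)))).
    pose proof (hnorm_ge0 H (hsub (xs k) l)). nra. right. field; repeat split; intro; lra. }
  assert (T2 : / (INR k + 4) * hnorm (A (xs k)) <= / (INR k + 4) * (nA * (Y / c)))
    by (apply Rmult_le_compat_l; lra).
  lra.
Qed.

Lemma not_spec : ~ in_spectrum A z.
Proof.
  intro Hs. apply Hs.
  set (B := fun y => proj1_sig (constructive_indefinite_description _ (solve_1 y))).
  assert (PB : forall y, L 1 (B y) = y)
    by (intro y; exact (proj2_sig (constructive_indefinite_description _ (solve_1 y)))).
  exists B. split; [split; [split|] |].
  - intros x y. apply L_inj. rewrite L_add, !PB. reflexivity.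
  - intros a x. apply L_inj. rewrite L_scal, !PB. reflexivity.
  - exists (/ (eps / 2)). intro x. pose proof (L_lower 1 (B x) ltac:(lra)) as P. rewrite PB in P.
    apply (Rmult_le_reg_l (eps / 2)); [lra|]. rewrite <- Rmult_assoc, Rinv_r by lra. lra.
  - split.
    + intro x. apply L_inj. rewrite PB, L1. reflexivity.
    + intro x. rewrite <- L1. apply PB.
Qed.

End Inv.

Lemma normalize (H : HilbertSpace) (x : H) : x <> hzero H ->
  exists u, hnorm u = 1 /\ 0 < hnorm x /\ x = hscal H (mkC (hnorm x) 0) u.
Proof.
  intro Hx. set (t := hnorm x).
  assert (Ht : 0 < t).
  { destruct (Req_dec t 0) as [E|E]. exfalso. apply Hx. apply hnorm_zero_inv; auto.
    pose proof (hnorm_ge0 H x). unfold t in *; lra. }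
  exists (hscal H (mkC (/ t) 0) x). split; [|split; auto].
  - rewrite hnorm_scal, Cmod_real, Rabs_right. fold t. field. lra.
    apply Rle_ge, Rlt_le, Rinv_0_lt_compat; lra.
  - rewrite hscal_assoc. replace (Cmul (mkC t 0) (mkC (/ t) 0)) with Defs.C1.
    rewrite hscal_one; auto. apply Ceq; simpl; field; lra.
Qed.

Theorem lemma1 (H : HilbertSpace) (A : H -> H) (nA : R)
  (hH : exists x : H, x <> hzero H)
  (hA : is_bounded_op A)
  (hnA : op_norm A nA) :
  forall z : Cplx, Cmod z = nA ->
    (in_W0 A nA z <-> in_clW A z) /\ (in_clW A z <-> in_spectrum A z).
Proof.
  destruct hA as [[Aadd Ascal] _].
  assert (Aadd' : additive H A) by exact Aadd.
  destruct hnA as [Hub _].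
  assert (Abnd : forall x, hnorm (A x) <= nA * hnorm x).
  { intro x. destruct (classic (x = hzero H)) as [E|E].
    - subst x. rewrite (add_map_zero H A Aadd'), hnorm_zero. lra.
    - destruct (normalize H x E) as [u [Hu [Hp Ex]]].
      rewrite Ex at 1. rewrite Ascal, hnorm_scal, Cmod_real, Rabs_right by lra.
      assert (hnorm (A u) <= nA) by (apply Hub; exists u; auto). nra. }
  assert (nA0 : 0 <= nA).
  { destruct hH as [x Hx]. destruct (normalize H x Hx) as [u [Hu _]].
    apply Rle_trans with (hnorm (A u)). apply hnorm_ge0. apply Hub. exists u; auto. }
  intros z Hz. split; split.
  - apply W0_clW.
  - eapply clW_W0; eauto.
  - eapply clW_spec; eauto.
  - intro Hs. destruct (classic (in_clW A z)) as [C|C]; auto. exfalso.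
    unfold in_clW in C. apply not_all_ex_not in C. destruct C as [eps C].
    apply imply_to_and in C. destruct C as [Heps C].
    assert (Hfar : forall x : H, hnorm x = 1 -> eps <= Cmod (Csub (hinner H (A x) x) z)).
    { intros x Hx. apply Rnot_lt_le. intro Lt. apply C. exists (hinner H (A x) x).
      split; auto. exists x; auto. }
    destruct (Req_dec nA 0) as [E|E].
    + assert (z = Defs.C0) by (apply Cmod_0_inv; lra). subst z.
      destruct hH as [x Hx]. destruct (normalize H x Hx) as [u [Hu _]].
      pose proof (Hfar u Hu) as F.
      assert (A u = hzero H).
      { apply hnorm_zero_inv. pose proof (Abnd u). pose proof (hnorm_ge0 H (A u)). nra. }
      rewrite H0, inner_zero_l in F.
      replace (Csub Defs.C0 Defs.C0) with Defs.C0 in F by (apply Ceq; simpl; ring).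
      rewrite Cmod_C0 in F. lra.
    + eapply (not_spec H A nA Aadd' Ascal Abnd ltac:(lra) z Hz eps Heps Hfar). exact Hs.
Qed.
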